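(* Let $q$ be a prime power. Every outcome of the random graph $H_q^*$ is $K_4$-free.
   Context: $\mathcal H$ is the Hermitian unital $\{\langle x,y,z\rangle : x^{q+1}+y^{q+1}+z^{q+1}=0\}$ in the projective plane $\mathrm{PG}(2,q^2)$ (it has $q^3+1$ points and every line meets it in $1$ or $q+1$ points; lines meeting it in $q+1$ points are secants). $H_q$ is the graph on the set of secants, two distinct secants adjacent iff they meet in a point of $\mathcal H$. For $P\in\mathcal H$, $C_P$ is the set of secants through $P$ and $\mathcal C=\{C_P:P\in\mathcal H\}$. The random graph $H_q^*$ on vertex set $V(H_q)$ is defined as follows: for each $C\in\mathcal C$, independently over cliques and vertices, each vertex of $C$ is placed in $A_C$ or $B_C$ with probability $1/2$ each; $H_q^*$ is the union over $C\in\mathcal C$ of the complete bipartite graphs with parts $A_C$ and $B_C$. *)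

(* Defs.v *)
From HB Require Import structures.
From mathcomp Require Import all_boot all_order all_algebra.
Set Implicit Arguments. Unset Strict Implicit. Unset Printing Implicit Defensive.
Import GRing.Theory.
Local Open Scope ring_scope.

Section Hermitian.
Variables (F : finFieldType) (q : nat).

(* A projective point of PG(2,F) is the 1-dimensional subspace spanned by a
   nonzero vector, represented as a set of row vectors. *)
Definition span1 (v : 'rV[F]_3) : {set 'rV[F]_3} := [set c *: v | c : F].

Definition is_ppoint (X : {set 'rV[F]_3}) : bool :=
  [exists v : 'rV[F]_3, (v != 0) && (X == span1 v)].

Definition ppoint := {X : {set 'rV[F]_3} | is_ppoint X}.

(* incidence of a point with the line with coordinate vector a *)
Definition incid (a : 'rV[F]_3) (P : ppoint) : bool :=
  [forall v in val P, v *m a^T == 0].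

Definition is_pline (L : {set ppoint}) : bool :=
  [exists a : 'rV[F]_3, (a != 0) && (L == [set P | incid a P])].

Definition herm (v : 'rV[F]_3) : bool := \sum_(i < 3) v 0 i ^+ q.+1 == 0.

Definition onH (P : ppoint) : bool := [forall v in val P, herm v].

Definition secant (L : {set ppoint}) : bool :=
  is_pline L && (#|[set P in L | onH P]| == q.+1)%N.

(* An outcome of H_q^*: s P L says whether the secant L is in A_{C_P}
   (true) or B_{C_P} (false). *)
Definition adjStar (s : ppoint -> {set ppoint} -> bool) (L M : {set ppoint}) :=
  [exists P : ppoint, [&& onH P, P \in L, P \in M & s P L != s P M]].

End Hermitian.

Definition prime_power (q : nat) : Prop :=
  exists p k : nat, [/\ prime p, (0 < k)%N & q = (p ^ k)%N].

(* Main.v *)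
Require Import Defs.
From HB Require Import structures.
From mathcomp Require Import all_boot all_order all_algebra.
From mathcomp Require Import finfield.
From mathcomp Require Import ring.
Set Implicit Arguments. Unset Strict Implicit. Unset Printing Implicit Defensive.
Import GRing.Theory.
Local Open Scope ring_scope.
Lemma frobD (F : finFieldType) (q : nat) : prime_power q -> #|F| = (q ^ 2)%N ->
  forall x y : F, (x + y) ^+ q = x ^+ q + y ^+ q.
Proof.
move=> [p [k [pp k0 ->]]] hF x y; apply: exprDn_pchar.
have hc : p \in [pchar F].
  by apply: (@card_finPcharP F p (k * 2)) => //; rewrite hF -expnM.
by rewrite pnatX (pnatE _ pp) hc.
Qed.

Lemma frobK (F : finFieldType) (q : nat) : #|F| = (q ^ 2)%N ->
  forall x : F, (x ^+ q) ^+ q = x.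
Proof. move=> hF x; rewrite -exprM.
have e : (q * q)%N = #|F| by rewrite hF expnS expn1.
by rewrite e expf_card. Qed.
Section Core.
Variable (F : fieldType) (f : F -> F).
Hypothesis fD : forall a b, f (a + b) = f a + f b.
Hypothesis fM : forall a b, f (a * b) = f a * f b.
Hypothesis fK : forall a, f (f a) = a.

Lemma f0 : f 0 = 0.
Proof. by apply: (@addrI _ (f 0)); rewrite -fD !addr0. Qed.

Lemma fN a : f (- a) = - f a.
Proof. by apply/eqP; rewrite -subr_eq0 opprK -fD addNr f0. Qed.

Lemma f_neq0 a : a != 0 -> f a != 0.
Proof. by apply: contra => /eqP h; rewrite -[a]fK h f0. Qed.

Definition dt (x0 x1 x2 y0 y1 y2 z0 z1 z2 : F) :=
  x0 * (y1 * z2 - y2 * z1) - x1 * (y0 * z2 - y2 * z0) + x2 * (y0 * z1 - y1 * z0).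

Definition hm (x0 x1 x2 : F) := x0 * f x0 + x1 * f x1 + x2 * f x2.

Lemma ideal (x y z X Y Z c2 c3 d1 d3 e1 e2 C2 C3 D1 D3 E1 E2 : F) :
  c3 * C2 != 0 -> d3 * D1 != 0 -> e2 * E1 != 0 ->
  c2 * C3 * z + c3 * C2 * Z = 0 ->
  d1 * D3 * y + d3 * D1 * Y = 0 ->
  e1 * E2 * x + e2 * E1 * X = 0 ->
  c2 * d3 * e1 + c3 * d1 * e2 = 0 ->
  C2 * D3 * E1 + C3 * D1 * E2 = 0 ->
  x * z * Y + y * X * Z = 0.
Proof.
move=> n1 n2 n3 h1 h2 h3 h4 h5.
have E : (x * z * Y + y * X * Z) * ((c3 * C2) * (d3 * D1) * (e2 * E1)) =
  x * z * (c3 * C2) * (e2 * E1) * (d1 * D3 * y + d3 * D1 * Y)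
  + y * (d3 * D1) * ((c2 * C3 * z + c3 * C2 * Z) * (e1 * E2 * x + e2 * E1 * X)
        - (c2 * C3 * z + c3 * C2 * Z) * (e1 * E2 * x)
        - (c2 * C3 * z) * (e1 * E2 * x + e2 * E1 * X))
  + x * y * z * ((c2 * d3 * e1 + c3 * d1 * e2) * (C3 * D1 * E2)
        - (c3 * d1 * e2) * (C2 * D3 * E1 + C3 * D1 * E2)) by ring.
have E0 : (x * z * Y + y * X * Z) * ((c3 * C2) * (d3 * D1) * (e2 * E1)) = 0.
  by rewrite E h1 h2 h3 h4 h5; ring.
move/eqP: E0; rewrite mulf_eq0 (negbTE (mulf_neq0 (mulf_neq0 n1 n2) n3)) orbF.
by move/eqP.
Qed.

Lemma core (u0 u1 u2 v0 v1 v2 w0 w1 w2 c2 c3 d1 d3 e1 e2 : F) :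
  c2 != 0 -> c3 != 0 -> d1 != 0 -> d3 != 0 -> e1 != 0 -> e2 != 0 ->
  hm u0 u1 u2 = 0 -> hm v0 v1 v2 = 0 -> hm w0 w1 w2 = 0 ->
  hm (c2 * v0 + c3 * w0) (c2 * v1 + c3 * w1) (c2 * v2 + c3 * w2) = 0 ->
  hm (d1 * u0 + d3 * w0) (d1 * u1 + d3 * w1) (d1 * u2 + d3 * w2) = 0 ->
  hm (e1 * u0 + e2 * v0) (e1 * u1 + e2 * v1) (e1 * u2 + e2 * v2) = 0 ->
  dt (c2 * v0 + c3 * w0) (c2 * v1 + c3 * w1) (c2 * v2 + c3 * w2)
     (d1 * u0 + d3 * w0) (d1 * u1 + d3 * w1) (d1 * u2 + d3 * w2)
     (e1 * u0 + e2 * v0) (e1 * u1 + e2 * v1) (e1 * u2 + e2 * v2) = 0 ->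
  dt u0 u1 u2 v0 v1 v2 w0 w1 w2 = 0.
Proof.
move=> nc2 nc3 nd1 nd3 ne1 ne2 hu hv hw h14 h24 h34 hcol.
apply/eqP; apply: contraTT isT => nD.
pose D := dt u0 u1 u2 v0 v1 v2 w0 w1 w2.
have hcol' : (c2 * d3 * e1 + c3 * d1 * e2) * D = 0.
  by rewrite -hcol /D /dt; ring.
have h4 : c2 * d3 * e1 + c3 * d1 * e2 = 0.
  by apply/eqP; move: hcol' => /eqP; rewrite mulf_eq0 (negbTE nD) orbF.
have h5 : f c2 * f d3 * f e1 + f c3 * f d1 * f e2 = 0.
  by rewrite -!fM -fD h4 f0.
pose x := u0 * f v0 + u1 * f v1 + u2 * f v2.
pose y := u0 * f w0 + u1 * f w1 + u2 * f w2.
pose z := v0 * f w0 + v1 * f w1 + v2 * f w2.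
have fx : f x = v0 * f u0 + v1 * f u1 + v2 * f u2 by rewrite /x !fD !fM !fK; ring.
have fy : f y = w0 * f u0 + w1 * f u1 + w2 * f u2 by rewrite /y !fD !fM !fK; ring.
have fz : f z = w0 * f v0 + w1 * f v1 + w2 * f v2 by rewrite /z !fD !fM !fK; ring.
have hz : c2 * f c3 * z + c3 * f c2 * f z = 0.
  rewrite -h14 fz /z /hm !fD !fM.
  move: hv hw; rewrite /hm => hv hw.
  transitivity (c2 * f c2 * (v0 * f v0 + v1 * f v1 + v2 * f v2)
     + c3 * f c3 * (w0 * f w0 + w1 * f w1 + w2 * f w2)
     + c2 * f c3 * (v0 * f w0 + v1 * f w1 + v2 * f w2)
     + c3 * f c2 * (w0 * f v0 + w1 * f v1 + w2 * f v2)).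
    by rewrite hv hw; ring.
  ring.
have hy : d1 * f d3 * y + d3 * f d1 * f y = 0.
  rewrite -h24 fy /y /hm !fD !fM.
  move: hu hw; rewrite /hm => hu hw.
  transitivity (d1 * f d1 * (u0 * f u0 + u1 * f u1 + u2 * f u2)
     + d3 * f d3 * (w0 * f w0 + w1 * f w1 + w2 * f w2)
     + d1 * f d3 * (u0 * f w0 + u1 * f w1 + u2 * f w2)
     + d3 * f d1 * (w0 * f u0 + w1 * f u1 + w2 * f u2)).
    by rewrite hu hw; ring.
  ring.
have hx : e1 * f e2 * x + e2 * f e1 * f x = 0.
  rewrite -h34 fx /x /hm !fD !fM.
  move: hu hv; rewrite /hm => hu hv.
  transitivity (e1 * f e1 * (u0 * f u0 + u1 * f u1 + u2 * f u2)
     + e2 * f e2 * (v0 * f v0 + v1 * f v1 + v2 * f v2)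
     + e1 * f e2 * (u0 * f v0 + u1 * f v1 + u2 * f v2)
     + e2 * f e1 * (v0 * f u0 + v1 * f u1 + v2 * f u2)).
    by rewrite hu hv; ring.
  ring.
have K : x * z * f y + y * f x * f z = 0.
  apply: (ideal _ _ _ hz hy hx h4 h5); apply: mulf_neq0 => //; exact: f_neq0.
have G : D * f D = x * z * f y + y * f x * f z.
  move: hu hv hw; rewrite /hm => hu hv hw.
  rewrite fx fy fz /x /y /z /D /dt !(fD, fM, fN).
  transitivity (dt (u0 * f u0 + u1 * f u1 + u2 * f u2) x y
                   (v0 * f u0 + v1 * f u1 + v2 * f u2) (v0 * f v0 + v1 * f v1 + v2 * f v2) z
                   (w0 * f u0 + w1 * f u1 + w2 * f u2) (w0 * f v0 + w1 * f v1 + w2 * f v2)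
                   (w0 * f w0 + w1 * f w1 + w2 * f w2)).
    rewrite /dt /x /y /z; ring.
  rewrite hu hv hw /dt /x /y /z; ring.
move: G; rewrite K => /eqP; rewrite mulf_eq0 (negbTE nD) /=.
by move/(f_neq0): nD => /negbTE ->.
Qed.

End Core.
Section Geo.
Variable F : finFieldType.
Implicit Types x y z a b u v w p r : 'rV[F]_3.

Lemma ord3_cases (i : 'I_3) : i = 0 \/ i = 1 \/ i = 2.
Proof.
case: i => [[|[|[|//]]] Hi]; [left|right; left|right; right]; exact: val_inj.
Qed.

Lemma sum3 (g : 'I_3 -> F) : \sum_(i < 3) g i = g 0 + g 1 + g 2.
Proof.
rewrite !big_ord_recl big_ord0 addr0 addrA.
by congr (g _ + g _ + g _); apply: val_inj.
Qed.

Definition dot x y := x 0 0 * y 0 0 + x 0 1 * y 0 1 + x 0 2 * y 0 2.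
Definition cross x y : 'rV[F]_3 :=
  \row_(k < 3) nth 0 [:: x 0 1 * y 0 2 - x 0 2 * y 0 1;
                         x 0 2 * y 0 0 - x 0 0 * y 0 2;
                         x 0 0 * y 0 1 - x 0 1 * y 0 0] k.
Definition det3 x y z :=
  dt (x 0 0) (x 0 1) (x 0 2) (y 0 0) (y 0 1) (y 0 2) (z 0 0) (z 0 1) (z 0 2).
Definition par x y := forall i j : 'I_3, x 0 i * y 0 j = x 0 j * y 0 i.

Lemma crossE x y :
  [/\ cross x y 0 0 = x 0 1 * y 0 2 - x 0 2 * y 0 1,
      cross x y 0 1 = x 0 2 * y 0 0 - x 0 0 * y 0 2 &
      cross x y 0 2 = x 0 0 * y 0 1 - x 0 1 * y 0 0].
Proof. by rewrite !mxE. Qed.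

Lemma nz_coord x : x != 0 -> exists k, x 0 k != 0.
Proof.
move=> nx; have [k hk|h] := pickP (fun k => x 0 k != 0); first by exists k.
case/eqP: nx; apply/matrixP => i j; rewrite (ord1 i) mxE.
by move: (h j) => /= /negbFE /eqP.
Qed.

Lemma par_scale a b : a != 0 -> par a b -> exists c, b = c *: a.
Proof.
move=> na H; have [k hk] := nz_coord na.
exists (b 0 k / a 0 k); apply/matrixP => i j; rewrite (ord1 i) !mxE.
apply: (mulfI hk); rewrite H; field; exact: hk.
Qed.

Lemma scale_par c w : par (c *: w) w.
Proof. by move=> i j; rewrite !mxE; ring. Qed.

Lemma par_trans x y c : c != 0 -> par x c -> par y c -> par x y.
Proof.
move=> nc Hx Hy; have [k hk] := nz_coord nc => i j.
apply: (mulfI (mulf_neq0 hk hk)).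
transitivity ((x 0 i * c 0 k) * (y 0 j * c 0 k)); first by ring.
rewrite (Hx i k) (Hy j k).
transitivity ((x 0 j * c 0 k) * (y 0 i * c 0 k)); last by ring.
rewrite (Hx j k) (Hy i k); ring.
Qed.

Lemma par_cases x y :
  x 0 1 * y 0 2 = x 0 2 * y 0 1 -> x 0 2 * y 0 0 = x 0 0 * y 0 2 ->
  x 0 0 * y 0 1 = x 0 1 * y 0 0 -> par x y.
Proof.
move=> e0 e1 e2 i j.
case: (ord3_cases i) => [->|[->|->]]; case: (ord3_cases j) => [->|[->|->]] //;
  by [rewrite e0 | rewrite -e0 | rewrite e1 | rewrite -e1 | rewrite e2 | rewrite -e2].
Qed.

Lemma sub_eq (s t : F) : s - t = 0 -> s = t.
Proof. by move/eqP; rewrite subr_eq0 => /eqP. Qed.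

Lemma dot_cross_par x a b : dot x a = 0 -> dot x b = 0 -> par x (cross a b).
Proof.
move=> ha hb; have [c0 c1 c2] := crossE a b.
apply: par_cases; apply: sub_eq; rewrite ?c0 ?c1 ?c2.
- transitivity (a 0 0 * dot x b - b 0 0 * dot x a); first by rewrite /dot; ring.
  by rewrite ha hb; ring.
- transitivity (a 0 1 * dot x b - b 0 1 * dot x a); first by rewrite /dot; ring.
  by rewrite ha hb; ring.
- transitivity (a 0 2 * dot x b - b 0 2 * dot x a); first by rewrite /dot; ring.
  by rewrite ha hb; ring.
Qed.

Lemma cross0_par a b : cross a b = 0 -> par a b.
Proof.
move/matrixP => H; have [c0 c1 c2] := crossE a b.
have h0 := H 0 0; have h1 := H 0 1; have h2 := H 0 2.
rewrite c0 mxE in h0; rewrite c1 mxE in h1; rewrite c2 mxE in h2.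
by apply: par_cases; apply: sub_eq.
Qed.

Lemma meetD x y a b : dot x a = 0 -> dot x b = 0 -> dot y a = 0 -> dot y b = 0 ->
  ~ par a b -> par x y.
Proof.
move=> h1 h2 h3 h4 npar.
have nc : cross a b != 0 by apply/eqP => /cross0_par.
exact: (par_trans nc (dot_cross_par h1 h2) (dot_cross_par h3 h4)).
Qed.

Lemma tripleI x y z a k : det3 x y z * a 0 k =
  dot x a * cross y z 0 k + dot y a * cross z x 0 k + dot z a * cross x y 0 k.
Proof.
by case: (ord3_cases k) => [->|[->|->]]; rewrite /det3 /dt /dot !mxE /=; ring.
Qed.

Lemma detZ x y z a : a != 0 -> dot x a = 0 -> dot y a = 0 -> dot z a = 0 ->
  det3 x y z = 0.
Proof.
move=> na hx hy hz; apply/eqP; apply: contraNT na => nd.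
apply/eqP/matrixP => i j; rewrite (ord1 i) mxE.
apply: (mulfI nd); rewrite mulr0 tripleI hx hy hz; ring.
Qed.

Lemma detE u v w a : dot v a = 0 -> dot w a = 0 -> ~ par v w -> det3 u v w = 0 ->
  dot u a = 0.
Proof.
move=> hv hw npar hd.
have nc : cross v w != 0 by apply/eqP => /cross0_par.
have [k hk] := nz_coord nc.
have := tripleI u v w a k; rewrite hd hv hw mul0r !mul0r !addr0 => /esym/eqP.
by rewrite mulf_eq0 (negbTE hk) orbF => /eqP.
Qed.

Lemma cramer u v w x : det3 u v w != 0 ->
  x = (det3 x v w / det3 u v w) *: u + (det3 u x w / det3 u v w) *: v
      + (det3 u v x / det3 u v w) *: w.
Proof.
move=> nd; apply/matrixP => i j; rewrite (ord1 i) !mxE.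
move: nd; rewrite /det3 => nd.
by case: (ord3_cases j) => [->|[->|->]]; rewrite /dt; field; exact: nd.
Qed.

Lemma dotZ c p a : dot (c *: p) a = c * dot p a.
Proof. by rewrite /dot !mxE; ring. Qed.

Lemma dotZr c p a : dot p (c *: a) = c * dot p a.
Proof. by rewrite /dot !mxE; ring. Qed.

Lemma mulmxtE v a : (v *m a^T) 0 0 = dot v a.
Proof. by rewrite !mxE sum3 !mxE. Qed.

Lemma mulmx_dot v a : (v *m a^T == 0) = (dot v a == 0).
Proof.
apply/eqP/eqP => [/matrixP/(_ 0 0)|h]; first by rewrite mulmxtE mxE.
by apply/matrixP => i j; rewrite (ord1 i) (ord1 j) mulmxtE h mxE.
Qed.

Lemma in_span1 p : p \in span1 p.
Proof. by apply/imsetP; exists 1; rewrite ?inE // scale1r. Qed.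

Lemma ppointP (P : ppoint F) : exists2 p, p != 0 & val P = span1 p.
Proof. by case: P => X /= /existsP [p /andP [p0 /eqP ->]]; exists p. Qed.

Lemma incidE a (P : ppoint F) p : val P = span1 p -> incid a P = (dot p a == 0).
Proof.
move=> hP; apply/forallP/idP => [/(_ p)|h v].
  by rewrite hP in_span1 /= mulmx_dot.
apply/implyP; rewrite hP => /imsetP [c _ ->].
by rewrite mulmx_dot dotZ (eqP h) mulr0.
Qed.

Lemma onH_herm q (P : ppoint F) p : val P = span1 p -> onH q P -> herm q p.
Proof. by move=> hP /forallP/(_ p)/implyP; apply; rewrite hP in_span1. Qed.

Lemma par_ppoint (P Q : ppoint F) p r : val P = span1 p -> val Q = span1 r ->
  p != 0 -> r != 0 -> par p r -> P = Q.
Proof.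
move=> hP hQ np nr hpar; have [c hc] := par_scale np hpar.
have nc : c != 0 by apply: contraNneq nr => c0; rewrite hc c0 scale0r.
apply: val_inj; rewrite hP hQ hc; apply/setP => t.
apply/imsetP/imsetP => [[d _ ->]|[d _ ->]].
  by exists (d / c); rewrite ?inE // scalerA divfK.
by exists (d * c); rewrite ?inE // scalerA.
Qed.

Lemma plineP (L : {set ppoint F}) :
  is_pline L -> exists2 a, a != 0 & L = [set P | incid a P].
Proof. by case/existsP => a /andP [na /eqP ->]; exists a. Qed.

Lemma par_lineE a b : a != 0 -> b != 0 -> par a b ->
  [set P : ppoint F | incid a P] = [set P | incid b P].
Proof.
move=> na nb hpar; have [c hc] := par_scale na hpar.
have nc : c != 0 by apply: contraNneq nb => c0; rewrite hc c0 scale0r.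
apply/setP => P; rewrite !inE; have [p _ hp] := ppointP P.
by rewrite !(incidE _ hp) hc dotZr mulf_eq0 (negbTE nc).
Qed.

Lemma memE (L : {set ppoint F}) a P p : L = [set P | incid a P] -> val P = span1 p ->
  (P \in L) = (dot p a == 0).
Proof. by move=> -> hp; rewrite inE (incidE _ hp). Qed.

Lemma meet_once (L M : {set ppoint F}) P Q : is_pline L -> is_pline M -> L != M ->
  P \in L -> P \in M -> Q \in L -> Q \in M -> P = Q.
Proof.
move=> /plineP [a na hL] /plineP [b nb hM] nLM.
have [p np hp] := ppointP P; have [r nr hr] := ppointP Q.
rewrite (memE hL hp) (memE hM hp) (memE hL hr) (memE hM hr).
move=> /eqP h1 /eqP h2 /eqP h3 /eqP h4.
apply: (par_ppoint hp hr np nr); apply: (meetD h1 h2 h3 h4) => hab.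
by case/eqP: nLM; rewrite hL hM (par_lineE na nb hab).
Qed.

Lemma tri (Li Lj Lk : {set ppoint F}) (Pij Pik Pjk : ppoint F)
  (s : ppoint F -> {set ppoint F} -> bool) :
  is_pline Lj -> is_pline Lk -> Lj != Lk ->
  Pij \in Lj -> Pik \in Lk -> Pjk \in Lj -> Pjk \in Lk ->
  s Pij Li != s Pij Lj -> s Pik Li != s Pik Lk -> s Pjk Lj != s Pjk Lk ->
  Pij != Pik.
Proof.
move=> plj plk njk h1 h2 h3 h4 s1 s2 s3; apply/eqP => E; subst Pik.
have E2 := meet_once plj plk njk h1 h2 h3 h4; subst Pjk.
by move: s1 s2 s3; case: (s Pij Li); case: (s Pij Lj); case: (s Pij Lk).
Qed.

End Geo.

Lemma hermE (F : finFieldType) (q : nat) (x : 'rV[F]_3) :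
  herm q x -> hm (fun t => t ^+ q) (x 0 0) (x 0 1) (x 0 2) = 0.
Proof. by rewrite /herm sum3 /hm !exprS => /eqP. Qed.

Theorem mainTheorem7 (F : finFieldType) (q : nat) :
  prime_power q -> #|F| = (q ^ 2)%N ->
  forall (s : ppoint F -> {set ppoint F} -> bool)
         (L1 L2 L3 L4 : {set ppoint F}),
    secant q L1 -> secant q L2 -> secant q L3 -> secant q L4 ->
    uniq [:: L1; L2; L3; L4] ->
    ~ (adjStar q s L1 L2 /\ adjStar q s L1 L3 /\ adjStar q s L1 L4 /\
       adjStar q s L2 L3 /\ adjStar q s L2 L4 /\ adjStar q s L3 L4).
Proof.
move=> hq hF s L1 L2 L3 L4 /andP [pl1 _] /andP [pl2 _] /andP [pl3 _] /andP [pl4 _].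
rewrite /= !inE !negb_or => /andP [/and3P [n12 n13 n14] /andP [/andP [n23 n24] /andP [n34 _]]].
case=> /existsP [P12 /and4P [o12 i12a i12b s12]].
case=> /existsP [P13 /and4P [o13 i13a i13b s13]].
case=> /existsP [P14 /and4P [o14 i14a i14b s14]].
case=> /existsP [P23 /and4P [o23 i23a i23b s23]].
case=> /existsP [P24 /and4P [o24 i24a i24b s24]].
move=> /existsP [P34 /and4P [o34 i34a i34b s34]].
have d12_13 : P12 != P13 := tri pl2 pl3 n23 i12b i13b i23a i23b s12 s13 s23.
have d12_14 : P12 != P14 := tri pl2 pl4 n24 i12b i14b i24a i24b s12 s14 s24.
have d13_14 : P13 != P14 := tri pl3 pl4 n34 i13b i14b i34a i34b s13 s14 s34.
have d12_23 : P12 != P23.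
  by apply: (tri (Li:=L2) (s:=s) pl1 pl3 n13 i12a i23b i13a i13b) => //; rewrite eq_sym.
have d12_24 : P12 != P24.
  by apply: (tri (Li:=L2) (s:=s) pl1 pl4 n14 i12a i24b i14a i14b) => //; rewrite eq_sym.
have d23_24 : P23 != P24 := tri pl3 pl4 n34 i23b i24b i34a i34b s23 s24 s34.
have d13_34 : P13 != P34.
  by apply: (tri (Li:=L3) (s:=s) pl1 pl4 n14 i13a i34b i14a i14b) => //; rewrite eq_sym.
have d23_34 : P23 != P34.
  by apply: (tri (Li:=L3) (s:=s) pl2 pl4 n24 i23a i34b i24a i24b) => //; rewrite eq_sym.
have [a1 na1 hL1] := plineP pl1; have [a2 na2 hL2] := plineP pl2.
have [a3 na3 hL3] := plineP pl3; have [a4 na4 hL4] := plineP pl4.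
have [p12 np12 hp12] := ppointP P12; have [p13 np13 hp13] := ppointP P13.
have [p14 np14 hp14] := ppointP P14; have [p23 np23 hp23] := ppointP P23.
have [p24 np24 hp24] := ppointP P24; have [p34 np34 hp34] := ppointP P34.
have hh12 := hermE (onH_herm hp12 o12); have hh13 := hermE (onH_herm hp13 o13).
have hh14 := hermE (onH_herm hp14 o14); have hh23 := hermE (onH_herm hp23 o23).
have hh24 := hermE (onH_herm hp24 o24); have hh34 := hermE (onH_herm hp34 o34).
have e12a := i12a; have e12b := i12b; have e13a := i13a; have e13b := i13b.
have e14a := i14a; have e14b := i14b; have e23a := i23a; have e23b := i23b.
have e24a := i24a; have e24b := i24b; have e34a := i34a; have e34b := i34b.
rewrite (memE hL1 hp12) in e12a; rewrite (memE hL2 hp12) in e12b.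
rewrite (memE hL1 hp13) in e13a; rewrite (memE hL3 hp13) in e13b.
rewrite (memE hL1 hp14) in e14a; rewrite (memE hL4 hp14) in e14b.
rewrite (memE hL2 hp23) in e23a; rewrite (memE hL3 hp23) in e23b.
rewrite (memE hL2 hp24) in e24a; rewrite (memE hL4 hp24) in e24b.
rewrite (memE hL3 hp34) in e34a; rewrite (memE hL4 hp34) in e34b.
move/eqP: e12a => e12a; move/eqP: e12b => e12b; move/eqP: e13a => e13a.
move/eqP: e13b => e13b; move/eqP: e14a => e14a; move/eqP: e14b => e14b.
move/eqP: e23a => e23a; move/eqP: e23b => e23b; move/eqP: e24a => e24a.
move/eqP: e24b => e24b; move/eqP: e34a => e34a; move/eqP: e34b => e34b.
have npar : forall (P Q : ppoint F) p r, val P = span1 p -> val Q = span1 r ->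
    p != 0 -> r != 0 -> P != Q -> ~ par p r.
  by move=> P Q p r hp hr np nr nPQ hpar; case/eqP: nPQ; exact: par_ppoint hp hr np nr hpar.
have nvw : ~ par p13 p12 by apply: (npar _ _ _ _ hp13 hp12) => //; rewrite eq_sym.
have nD : det3 p23 p13 p12 != 0.
  apply/eqP => hD.
  have h := detE e13a e12a nvw hD.
  have : P23 \in L1 by rewrite (memE hL1 hp23) h.
  move=> i23c; case/eqP: d12_23.
  exact: (meet_once pl1 pl2 n12 i12a i12b i23c i23a).
set D := det3 p23 p13 p12 in nD.
have E14 := cramer p14 nD.
rewrite (detZ na1 e14a e13a e12a) mul0r scale0r add0r in E14.
have E24 := cramer p24 nD.
rewrite (detZ na2 e23a e24a e12b) mul0r scale0r addr0 in E24.
have E34 := cramer p34 nD.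
rewrite (detZ na3 e23b e13b e34a) mul0r scale0r addr0 in E34.
have col := detZ na4 e14b e24b e34b.
move: (det3 p23 p14 p12 / D) (det3 p23 p13 p14 / D) E14 => c2 c3 E14.
move: (det3 p24 p13 p12 / D) (det3 p23 p13 p24 / D) E24 => d1 d3 E24.
move: (det3 p34 p13 p12 / D) (det3 p23 p34 p12 / D) E34 => e1 e2 E34.
have nc2 : c2 != 0.
  apply/eqP => c0; rewrite c0 scale0r add0r in E14.
  by apply: (npar _ _ _ _ hp14 hp12 np14 np12) => //; [rewrite eq_sym | rewrite E14; apply: scale_par].
have nc3 : c3 != 0.
  apply/eqP => c0; rewrite c0 scale0r addr0 in E14.
  by apply: (npar _ _ _ _ hp14 hp13 np14 np13) => //; [rewrite eq_sym | rewrite E14; apply: scale_par].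
have nd1 : d1 != 0.
  apply/eqP => c0; rewrite c0 scale0r add0r in E24.
  by apply: (npar _ _ _ _ hp24 hp12 np24 np12) => //; [rewrite eq_sym | rewrite E24; apply: scale_par].
have nd3 : d3 != 0.
  apply/eqP => c0; rewrite c0 scale0r addr0 in E24.
  by apply: (npar _ _ _ _ hp24 hp23 np24 np23) => //; [rewrite eq_sym | rewrite E24; apply: scale_par].
have ne1 : e1 != 0.
  apply/eqP => c0; rewrite c0 scale0r add0r in E34.
  by apply: (npar _ _ _ _ hp34 hp13 np34 np13) => //; [rewrite eq_sym | rewrite E34; apply: scale_par].
have ne2 : e2 != 0.
  apply/eqP => c0; rewrite c0 scale0r addr0 in E34.
  by apply: (npar _ _ _ _ hp34 hp23 np34 np23) => //; [rewrite eq_sym | rewrite E34; apply: scale_par].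
rewrite E14 !mxE in hh14; rewrite E24 !mxE in hh24; rewrite E34 !mxE in hh34.
rewrite E14 E24 E34 /det3 !mxE in col.
case/eqP: nD; rewrite /D /det3.
apply: (core (f := fun t : F => t ^+ q) _ _ _ nc2 nc3 nd1 nd3 ne1 ne2 hh23 hh13 hh12 hh14 hh24 hh34 col).
- exact: frobD hq hF.
- by move=> a b; rewrite exprMn.
- exact: frobK hF.
Qed.
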